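(* Assume the setting and the nsCRAIG recurrence described in the context, and let $k\ge1$ be such that $Q_k,B_k,H_k$ are defined. Then $H_k$ is nonsingular, and the vector $p^{(k)}=Q_ky_k$ with $y_k=-B_k^{-1}H_k^{-1}(\beta_1e_1)$ coincides with the $k$-th iterate of the full orthogonalization method (FOM), started from the zero initial guess and preconditioned with $N$, applied to the Schur-complement equation $Sp=-b$, $S=A^TM^{-1}A+C$; that is, $p^{(k)}$ is the unique $p\in\mathcal{K}_k:=\operatorname{span}\{N^{-1}b,(N^{-1}S)N^{-1}b,\dots,(N^{-1}S)^{k-1}N^{-1}b\}$ with $(-b-Sp)^Tx=0$ for all $x\in\mathcal{K}_k$. Moreover the nsCRAIG iterate $u^{(k)}$ satisfies $u^{(k)}=-M^{-1}Ap^{(k)}$.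
   Context: Setting: $M\in\mathbb{R}^{m\times m}$ is nonsymmetric and positive definite ($x^TMx>0$ for all $x\ne0$); $A\in\mathbb{R}^{m\times n}$ ($n\le m$) has full column rank; $C\in\mathbb{R}^{n\times n}$ is symmetric positive semidefinite; $b\in\mathbb{R}^n$ is nonzero; $N\in\mathbb{R}^{n\times n}$ is symmetric positive definite. Write $\|x\|_G=(x^TGx)^{1/2}$ for $G$ positive definite (for nonsymmetric $M$ this is the norm of its symmetric part). The generalized saddle point system is $Mu+Ap=0$, $A^Tu-Cp=b$, with unique solution $(u_*,p_* )$; $S=A^TM^{-1}A+C$. nsCRAIG recurrence (exact arithmetic): Initialization: $\beta_1=\|b\|_{N^{-1}}$, $q_1=N^{-1}b/\beta_1$, $Q_1=[q_1]$, $r_1=q_1$, $w_1=M^{-1}Aq_1$, $s_1=Cr_1$, $\alpha_1=(w_1^TMw_1+r_1^Ts_1)^{1/2}$, $v_1=w_1/\alpha_1$, $t_1=s_1/\alpha_1$, $\chi_1=\beta_1/\alpha_1$. For $k=1,2,\dots$: $\hat g_k=N^{-1}(A^Tv_k+t_k)$, $h_k=Q_k^TN\hat g_k\in\mathbb{R}^k$, $g_k=\hat g_k-Q_kh_k$, $\beta_{k+1}=\|g_k\|_N$; if $\beta_{k+1}=0$ the recurrence stops; otherwise $q_{k+1}=g_k/\beta_{k+1}$, $Q_{k+1}=[Q_k,q_{k+1}]$, $w_{k+1}=M^{-1}Aq_{k+1}-\beta_{k+1}v_k$, $r_{k+1}=q_{k+1}-(\beta_{k+1}/\alpha_k)r_k$,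 $s_{k+1}=Cr_{k+1}$, $\alpha_{k+1}=(w_{k+1}^TMw_{k+1}+r_{k+1}^Ts_{k+1})^{1/2}$, $v_{k+1}=w_{k+1}/\alpha_{k+1}$, $t_{k+1}=s_{k+1}/\alpha_{k+1}$, $\chi_{k+1}=-(\beta_{k+1}/\alpha_{k+1})\chi_k$. Matrices: $B_k\in\mathbb{R}^{k\times k}$ upper bidiagonal with $(B_k)_{ii}=\alpha_i$, $(B_k)_{i,i+1}=\beta_{i+1}$; $H_k\in\mathbb{R}^{k\times k}$ upper Hessenberg whose $j$-th column has entries $(H_k)_{ij}=(h_j)_i$ for $i\le j$, $(H_k)_{j+1,j}=\beta_{j+1}$ (if $j<k$), and zeros otherwise. The nsCRAIG iterates at step $k$ are $y_k=-B_k^{-1}H_k^{-1}(\beta_1e_1)$, $p^{(k)}=Q_ky_k$, $u^{(k)}=-M^{-1}Ap^{(k)}$, with $e_1$ the first unit vector of $\mathbb{R}^k$. *)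

(* Defs.v *)
From HB Require Import structures.
From mathcomp Require Import all_boot all_order all_algebra.
Set Implicit Arguments. Unset Strict Implicit. Unset Printing Implicit Defensive.
Import Order.TTheory GRing.Theory Num.Theory.
Local Open Scope ring_scope.

Section NsCRAIG.
Variables (R : rcfType) (m n : nat).
Variables (M : 'M[R]_m) (A : 'M[R]_(m, n)) (C N : 'M[R]_n) (b : 'cV[R]_n).

Definition qform p (G : 'M[R]_p) (x : 'cV[R]_p) : R := (x^T *m G *m x) 0 0.
Definition dotv p (x y : 'cV[R]_p) : R := (x^T *m y) 0 0.
Definition gnorm p (G : 'M[R]_p) (x : 'cV[R]_p) : R := Num.sqrt (qform G x).

(* State of nsCRAIG after step k (k >= 1):
   st_q = [q_1; ...; q_k], st_alpha = [alpha_1; ...; alpha_k],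
   st_beta = [beta_1; ...; beta_k], st_chi = [chi_1; ...; chi_k],
   st_h = [h_1; ...; h_{k-1}] (h_j as the seq of its j entries),
   and the current r_k, v_k, t_k. *)
Record craig_state := CState {
  st_q : seq 'cV[R]_n;
  st_alpha : seq R;
  st_beta : seq R;
  st_chi : seq R;
  st_h : seq (seq R);
  st_r : 'cV[R]_n;
  st_v : 'cV[R]_m;
  st_t : 'cV[R]_n }.

Definition craig_init : craig_state :=
  let beta1 := gnorm (invmx N) b in
  let q1 := beta1^-1 *: (invmx N *m b) in
  let r1 := q1 in
  let w1 := invmx M *m A *m q1 in
  let s1 := C *m r1 in
  let alpha1 := Num.sqrt (qform M w1 + dotv r1 s1) in
  CState [:: q1] [:: alpha1] [:: beta1] [:: beta1 / alpha1] [::]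
         r1 (alpha1^-1 *: w1) (alpha1^-1 *: s1).

Definition craig_ghat (s : craig_state) : 'cV[R]_n :=
  invmx N *m (A^T *m st_v s + st_t s).

Definition craig_step (s : craig_state) : craig_state :=
  let gh := craig_ghat s in
  let h := [seq (q^T *m N *m gh) 0 0 | q <- st_q s] in
  let g := gh - \sum_(i < size (st_q s)) nth 0 h i *: nth 0 (st_q s) i in
  let beta' := gnorm N g in
  let q' := beta'^-1 *: g in
  let alphak := last 0 (st_alpha s) in
  let w' := invmx M *m A *m q' - beta' *: st_v s in
  let r' := q' - (beta' / alphak) *: st_r s in
  let s' := C *m r' in
  let alpha' := Num.sqrt (qform M w' + dotv r' s') in
  CState (rcons (st_q s) q') (rcons (st_alpha s) alpha')
         (rcons (st_beta s) beta')
         (rcons (st_chi s) (- (beta' / alpha') * last 0 (st_chi s)))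
         (rcons (st_h s) h) r' (alpha'^-1 *: w') (alpha'^-1 *: s').

(* the state after step k, for k >= 1 *)
Definition craig_st (k : nat) : craig_state := iter k.-1 craig_step craig_init.

(* h_1, ..., h_k (h_k computed at step k from v_k, t_k) *)
Definition craig_hs (k : nat) : seq (seq R) :=
  let s := craig_st k in
  rcons (st_h s) [seq (q^T *m N *m craig_ghat s) 0 0 | q <- st_q s].

(* alpha_{i+1}, beta_{i+1} with 0-based index i *)
Definition alpha_ (k i : nat) : R := nth 0 (st_alpha (craig_st k)) i.
Definition beta_ (k i : nat) : R := nth 0 (st_beta (craig_st k)) i.

Definition craigQ (k : nat) : 'M[R]_(n, k) :=
  \matrix_(i < n, j < k) (nth 0 (st_q (craig_st k)) j) i 0.

(* B_k: upper bidiagonal, (B_k)_{ii} = alpha_i, (B_k)_{i,i+1} = beta_{i+1}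
   (1-based); in 0-based indices entry (i, i+1) is beta_{i+2}. *)
Definition craigB (k : nat) : 'M[R]_k :=
  \matrix_(i < k, j < k)
    if i == j :> nat then alpha_ k i
    else if j == i.+1 :> nat then beta_ k j else 0.

(* H_k: upper Hessenberg, column j holds h_j above/on the diagonal and
   beta_{j+1} just below it (1-based). *)
Definition craigH (k : nat) : 'M[R]_k :=
  \matrix_(i < k, j < k)
    if (i <= j)%N then nth 0 (nth [::] (craig_hs k) j) i
    else if i == j.+1 :> nat then beta_ k i else 0.

Definition craig_y (k : nat) : 'cV[R]_k :=
  - (invmx (craigB k) *m invmx (craigH k)
       *m \col_(i < k) (if i == 0 :> nat then beta_ k 0 else 0)).

Definition craig_p (k : nat) : 'cV[R]_n := craigQ k *m craig_y k.
Definition craig_u (k : nat) : 'cV[R]_m := - (invmx M *m A *m craig_p k).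

Definition schurS : 'M[R]_n := A^T *m invmx M *m A + C.

(* Rows spanning K_k = span{N^{-1}b, (N^{-1}S)N^{-1}b, ..., (N^{-1}S)^{k-1}N^{-1}b} *)
Definition krylov (k : nat) : 'M[R]_(k, n) :=
  \matrix_(i < k) ((invmx N *m schurS) ^+ i *m (invmx N *m b))^T.

End NsCRAIG.

(* Main.v *)
Require Import Defs.
From HB Require Import structures.
From mathcomp Require Import all_boot all_order all_algebra.
From mathcomp Require Import ring lra.
Import Order.TTheory GRing.Theory Num.Theory.
Local Open Scope ring_scope.
Set Implicit Arguments. Unset Strict Implicit. Unset Printing Implicit Defensive.

Section Craig.
Variables (R : rcfType) (m n : nat).
Variables (M : 'M[R]_m) (A : 'M[R]_(m, n)) (C N : 'M[R]_n) (b : 'cV[R]_n).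

Definition st i := iter i (craig_step M A C N) (craig_init M A C N b).
Definition qq i := nth 0 (st_q (st i)) i.
Definition al i := nth 0 (st_alpha (st i)) i.
Definition be i := nth 0 (st_beta (st i)) i.
Definition rr i := st_r (st i).
Definition vv i := st_v (st i).
Definition tt i := st_t (st i).
Definition gh i := craig_ghat A N (st i).
Definition hc i l := ((qq l)^T *m N *m gh i) 0 0.
Definition hh i := [seq (q^T *m N *m gh i) 0 0 | q <- st_q (st i)].

Lemma stS i : st i.+1 = craig_step M A C N (st i).
Proof. by rewrite /st iterS. Qed.

Lemma size_q i : size (st_q (st i)) = i.+1.
Proof. by elim: i => [|i IH] //; rewrite stS /= size_rcons IH. Qed.
Lemma size_al i : size (st_alpha (st i)) = i.+1.
Proof. by elim: i => [|i IH] //; rewrite stS /= size_rcons IH. Qed.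
Lemma size_be i : size (st_beta (st i)) = i.+1.
Proof. by elim: i => [|i IH] //; rewrite stS /= size_rcons IH. Qed.
Lemma size_h i : size (st_h (st i)) = i.
Proof. by elim: i => [|i IH] //; rewrite stS /= size_rcons IH. Qed.

Lemma nth_q i j : (j <= i)%N -> nth 0 (st_q (st i)) j = qq j.
Proof.
elim: i => [|i IH]; first by rewrite leqn0 => /eqP ->.
rewrite leq_eqVlt => /orP [/eqP -> //|Hj].
by rewrite stS /= nth_rcons size_q Hj IH.
Qed.
Lemma nth_al i j : (j <= i)%N -> nth 0 (st_alpha (st i)) j = al j.
Proof.
elim: i => [|i IH]; first by rewrite leqn0 => /eqP ->.
rewrite leq_eqVlt => /orP [/eqP -> //|Hj].
by rewrite stS /= nth_rcons size_al Hj IH.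
Qed.
Lemma nth_be i j : (j <= i)%N -> nth 0 (st_beta (st i)) j = be j.
Proof.
elim: i => [|i IH]; first by rewrite leqn0 => /eqP ->.
rewrite leq_eqVlt => /orP [/eqP -> //|Hj].
by rewrite stS /= nth_rcons size_be Hj IH.
Qed.
Lemma nth_h i j : (j < i)%N -> nth [::] (st_h (st i)) j = hh j.
Proof.
elim: i => [//|i IH].
rewrite ltnS leq_eqVlt => /orP [/eqP ->|Hj].
  by rewrite stS /= nth_rcons size_h ltnn eqxx.
by rewrite stS /= nth_rcons size_h Hj IH.
Qed.

Lemma nth_hh i l : (l <= i)%N -> nth 0 (hh i) l = hc i l.
Proof.
move=> Hl; rewrite /hh (nth_map (0:'cV[R]_n)); last by rewrite size_q ltnS.
by rewrite nth_q.
Qed.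

Definition gg i := gh i - \sum_(l < i.+1) hc i l *: qq l.

Lemma sum_st i :
  \sum_(l < size (st_q (st i))) nth 0 (hh i) l *: nth 0 (st_q (st i)) l
  = \sum_(l < i.+1) hc i l *: qq l.
Proof.
rewrite -(big_mkord xpredT (fun l => nth 0 (hh i) l *: nth 0 (st_q (st i)) l)).
rewrite size_q big_mkord; apply: eq_bigr => l _.
have Hl : (l <= i)%N by rewrite -ltnS ltn_ord.
by rewrite nth_hh // nth_q.
Qed.

Lemma last_al i : last 0 (st_alpha (st i)) = al i.
Proof. by rewrite -nth_last size_al nth_al. Qed.

Lemma gg_st i : craig_ghat A N (st i) -
  \sum_(l < size (st_q (st i))) nth 0 [seq (q^T *m N *m craig_ghat A N (st i)) 0 0 | q <- st_q (st i)] l *: nth 0 (st_q (st i)) l = gg i.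
Proof. by rewrite sum_st. Qed.

Lemma beS i : be i.+1 = Defs.gnorm N (gg i).
Proof. by rewrite /be stS /= gg_st nth_rcons size_be ltnn eqxx. Qed.

Lemma qqS i : qq i.+1 = (be i.+1)^-1 *: gg i.
Proof. by rewrite beS /qq stS /= gg_st nth_rcons size_q ltnn eqxx. Qed.

Lemma rrS i : rr i.+1 = qq i.+1 - (be i.+1 / al i) *: rr i.
Proof. by rewrite qqS beS /rr stS /= gg_st last_al. Qed.

Definition wS i := invmx M *m A *m qq i.+1 - be i.+1 *: vv i.

Lemma alS i : al i.+1 = Num.sqrt (qform M (wS i) + dotv (rr i.+1) (C *m rr i.+1)).
Proof.
by rewrite /wS rrS qqS beS /al stS /= gg_st last_al nth_rcons size_al ltnn eqxx.
Qed.

Lemma vvS i : vv i.+1 = (al i.+1)^-1 *: wS i.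
Proof. by rewrite alS /wS rrS qqS beS /vv stS /= gg_st last_al. Qed.

Lemma ttS i : tt i.+1 = (al i.+1)^-1 *: (C *m rr i.+1).
Proof. by rewrite alS /wS rrS qqS beS /tt stS /= gg_st last_al. Qed.

Lemma posdef_unit p (P : 'M[R]_p) :
  (forall z : 'cV_p, z != 0 -> (z^T *m P *m z) 0 0 != 0) -> P \in unitmx.
Proof.
move=> H; rewrite unitmxE unitfE; apply/negP => /det0P [v v0 vP].
have := H v^T; rewrite trmx_eq0 v0 trmxK vP mul0mx mxE eqxx.
by move=> /(_ isT).
Qed.

Definition ip (x y : 'cV[R]_n) := (x^T *m N *m y) 0 0.

Lemma hcE i l : hc i l = ip (qq l) (gh i). Proof. by []. Qed.

Lemma ipD x y z : ip x (y + z) = ip x y + ip x z.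
Proof. by rewrite /ip mulmxDr mxE. Qed.
Lemma ipZ x c y : ip x (c *: y) = c * ip x y.
Proof. by rewrite /ip -scalemxAr mxE. Qed.
Lemma ipN x y : ip x (- y) = - ip x y.
Proof. by rewrite /ip mulmxN mxE. Qed.
Lemma ipB x y z : ip x (y - z) = ip x y - ip x z.
Proof. by rewrite ipD ipN. Qed.
Lemma ip0 x : ip x 0 = 0.
Proof. by rewrite /ip mulmx0 mxE. Qed.
Lemma ip_sum x k (F : 'I_k -> 'cV[R]_n) :
  ip x (\sum_(l < k) F l) = \sum_(l < k) ip x (F l).
Proof. by rewrite /ip mulmx_sumr summxE. Qed.

Lemma sum_delta k (F : nat -> R) l : (l < k)%N ->
  \sum_(l' < k) F l' * (l == l')%:R = F l.
Proof.
move=> Hl; rewrite (bigD1 (Ordinal Hl)) //= eqxx mulr1 big1 ?addr0 // => j Hj.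
have -> : (l == j :> nat) = false.
  apply/negbTE; apply: contra Hj => /eqP E; apply/eqP/val_inj => /=; by rewrite E.
by rewrite mulr0.
Qed.

Variable n0 : nat.
Hypothesis HM : forall x : 'cV[R]_m, x != 0 -> 0 < qform M x.
Hypothesis HA : \rank A = n.
Hypothesis HC : forall x : 'cV[R]_n, 0 <= qform C x.
Hypothesis Hb : b != 0.
Hypothesis HNs : N^T = N.
Hypothesis HN : forall x : 'cV[R]_n, x != 0 -> 0 < qform N x.
Hypothesis Hbe : forall j, (1 <= j <= n0)%N -> be j != 0.

Lemma unitM : M \in unitmx.
Proof. by apply: posdef_unit => z /HM; rewrite /qform => /gt_eqF ->. Qed.
Lemma unitN : N \in unitmx.
Proof. by apply: posdef_unit => z /HN; rewrite /qform => /gt_eqF ->. Qed.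

Lemma Ainj (x : 'cV[R]_n) : A *m x = 0 -> x = 0.
Proof.
have hf : row_free A^T by rewrite /row_free mxrank_tr HA.
move=> H; apply/eqP; rewrite -trmx_eq0 -(mulmx_free_eq0 _ hf).
by rewrite -trmx_mul H trmx0.
Qed.

Lemma ipC x y : ip x y = ip y x.
Proof.
have E : forall a : 'M[R]_1, a 0 0 = a^T 0 0 by move=> a; rewrite mxE.
by rewrite /ip E !trmx_mul trmxK HNs mulmxA.
Qed.

Lemma ip_ge0 x : 0 <= ip x x.
Proof.
case: (x =P 0) => [->|/eqP nz]; first by rewrite ip0.
by apply: ltW; apply: HN.
Qed.

Lemma ip_eq0 x : ip x x = 0 -> x = 0.
Proof.
move=> H; apply/eqP; apply/negPn/negP => nz.
by have := HN nz; rewrite /qform -/(ip x x) H ltxx.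
Qed.

Lemma gh_dec j : gh j = \sum_(l < j.+1) hc j l *: qq l + be j.+1 *: qq j.+1.
Proof.
rewrite qqS scalerA; case: (be j.+1 =P 0) => [H0|/eqP Hne].
  have : gg j = 0.
    apply: ip_eq0; apply/eqP; rewrite eq_le ip_ge0 andbT -sqrtr_eq0.
    by move: H0; rewrite beS /Defs.gnorm /qform -/(ip _ _) => ->.
  rewrite H0 mul0r scale0r addr0 /gg => /eqP; rewrite subr_eq0 => /eqP //.
by rewrite mulfV // scale1r /gg addrC subrK.
Qed.

Lemma ip_gg i l : (l <= i)%N ->
  (forall l', (l' <= i)%N -> ip (qq l) (qq l') = (l == l')%:R) ->
  ip (qq l) (gg i) = 0.
Proof.
move=> Hl H; rewrite /gg ipB ip_sum.
rewrite (eq_bigr (fun l' : 'I_i.+1 => hc i l' * (l == l')%:R)).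
  by rewrite sum_delta // hcE subrr.
move=> l' _; rewrite ipZ H //; by rewrite -ltnS ltn_ord.
Qed.

Definition y0 := invmx N *m b.

Lemma y0_neq0 : y0 != 0.
Proof.
apply: contra Hb => /eqP H; apply/eqP.
by rewrite -(mulKVmx unitN b) -/y0 H mulmx0.
Qed.

Lemma qq0 : qq 0 = (be 0)^-1 *: y0. Proof. by []. Qed.
Lemma be0E : be 0 = Num.sqrt (ip y0 y0).
Proof.
rewrite /be /= /Defs.gnorm /qform /ip /y0; congr (Num.sqrt _).
rewrite trmx_mul trmx_inv HNs -!mulmxA (mulmxA (invmx N)) mulVmx ?unitN //.
by rewrite mul1mx.
Qed.
Lemma be0_gt0 : 0 < be 0.
Proof. by rewrite be0E sqrtr_gt0; apply: HN; apply: y0_neq0. Qed.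

Lemma inv_sqrt_sq (x : R) : Num.sqrt x != 0 ->
  (Num.sqrt x)^-1 * ((Num.sqrt x)^-1 * x) = 1.
Proof.
move=> h; have hx : 0 <= x.
  by rewrite leNgt; apply: contra h => /ltW; rewrite -sqrtr_eq0.
rewrite -{3}(sqr_sqrtr hx) mulrA -invfM -expr2 mulVf //.
by rewrite expf_eq0.
Qed.

Lemma ON i : (i <= n0)%N -> forall l l', (l <= i)%N -> (l' <= i)%N ->
  ip (qq l) (qq l') = (l == l')%:R.
Proof.
elim: i => [_|i IH Hi].
  move=> l l'; rewrite !leqn0 => /eqP -> /eqP ->.
  rewrite qq0 ipZ ipC ipZ be0E inv_sqrt_sq //.
  by rewrite -be0E; apply: lt0r_neq0; apply: be0_gt0.
have IH' := IH (ltnW Hi).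
have Hb1 : be i.+1 != 0 by apply: Hbe; rewrite Hi.
have Hgg : forall l, (l <= i)%N -> ip (qq l) (qq i.+1) = 0.
  move=> l Hl; rewrite qqS ipZ ip_gg ?mulr0 // => l' Hl'; exact: IH'.
have Hnn : ip (qq i.+1) (qq i.+1) = 1.
  rewrite qqS ipZ ipC ipZ.
  move: Hb1; rewrite beS /Defs.gnorm /qform -/(ip _ _) => Hb1.
  by rewrite inv_sqrt_sq.
move=> l l' Hl Hl'.
case: (ltngtP l i.+1) Hl => // [Hl _|-> _]; case: (ltngtP l' i.+1) Hl' => // [Hl' _|-> _].
- by apply: IH'; rewrite -ltnS.
- by rewrite Hgg ?ltn_eqF // -ltnS.
- by rewrite ipC Hgg ?(eq_sym i.+1) ?ltn_eqF // -ltnS.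
- by rewrite Hnn ?eqxx.
Qed.

Lemma ONn l l' : (l <= n0)%N -> (l' <= n0)%N -> ip (qq l) (qq l') = (l == l')%:R.
Proof. by move=> h1 h2; apply: (ON (leqnn n0)). Qed.

Lemma rr0 : rr 0 = qq 0. Proof. by []. Qed.

Lemma rinv i : (i <= n0)%N -> ip (qq i) (rr i) = 1 /\
  forall l, (i < l <= n0)%N -> ip (qq l) (rr i) = 0.
Proof.
elim: i => [H0|i IH Hi].
  rewrite rr0 ONn //; split => // l /andP [Hl Hl'].
  by rewrite ONn // ?(ltnW Hl) // gtn_eqF.
have [_ IH2] := IH (ltnW Hi).
rewrite rrS ipB ipZ ONn // eqxx IH2 ?ltnSn ?Hi // mulr0 subr0; split => //.
move=> l /andP [Hl Hl']; rewrite ipB ipZ IH2 ?Hl' ?(ltnW Hl) // mulr0 subr0.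
by rewrite ONn // ?(ltnW Hl) // gtn_eqF.
Qed.

Lemma rr_neq0 i : (i <= n0)%N -> rr i != 0.
Proof.
move=> Hi; apply/eqP => H; have [h _] := rinv Hi.
by move: h; rewrite H ip0 => /eqP; rewrite eq_sym oner_eq0.
Qed.

Definition wv (x : 'cV[R]_n) := invmx M *m A *m x.

Lemma pos_r r : r != 0 -> 0 < qform M (wv r) + dotv r (C *m r).
Proof.
move=> nz; have hw : wv r != 0.
  apply: contra nz => /eqP H; apply/eqP; apply: Ainj.
  have -> : A *m r = M *m wv r by rewrite /wv -mulmxA mulKVmx // unitM.
  by rewrite H mulmx0.
rewrite /dotv mulmxA -/(qform C r).
by move: (HC r) (HM hw) => *; lra.
Qed.

Lemma ainv i : (i <= n0)%N -> [/\ al i != 0,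
  al i = Num.sqrt (qform M (wv (rr i)) + dotv (rr i) (C *m rr i)),
  vv i = (al i)^-1 *: wv (rr i) & tt i = (al i)^-1 *: (C *m rr i)].
Proof.
elim: i => [H0|i IH Hi].
  have E : al 0 = Num.sqrt (qform M (wv (rr 0)) + dotv (rr 0) (C *m rr 0)) by [].
  split => //; rewrite E; apply: lt0r_neq0; rewrite sqrtr_gt0.
  exact: pos_r (rr_neq0 H0).
have [a0 _ ev _] := IH (ltnW Hi).
have Ew : wS i = wv (rr i.+1).
  rewrite /wS ev rrS /wv mulmxBr -scalemxAr scalerA //.
have Ea := alS i; rewrite Ew in Ea.
split => //; last by rewrite ttS.
  by rewrite Ea; apply: lt0r_neq0; rewrite sqrtr_gt0; exact: pos_r (rr_neq0 Hi).
by rewrite vvS Ew.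
Qed.

Lemma wr i : (i <= n0)%N -> wv (rr i) = al i *: vv i /\ C *m rr i = al i *: tt i.
Proof.
move=> Hi; have [a0 _ ev et] := ainv Hi.
by rewrite ev et !scalerA mulfV // !scale1r.
Qed.

Lemma Sx x : schurS M A C *m x = A^T *m wv x + C *m x.
Proof. by rewrite /schurS mulmxDl /wv !mulmxA. Qed.

Definition gm j := if j is j'.+1 then be j *: gh j' else 0.

Lemma gmS j : gm j.+1 = be j.+1 *: gh j. Proof. by []. Qed.
Lemma gm0 : gm 0 = 0. Proof. by []. Qed.

Lemma ghE j : gh j = invmx N *m (A^T *m vv j + tt j). Proof. by []. Qed.

Lemma Sq j : (j <= n0)%N -> invmx N *m (schurS M A C *m qq j) = al j *: gh j + gm j.
Proof.
case: j => [H0|j Hj].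
  have [e1 e2] := wr H0.
  by rewrite -rr0 Sx e1 e2 -scalemxAr -scalerDr -scalemxAr ghE gm0 addr0.
have [e1 e2] := wr Hj; have [e3 e4] := wr (ltnW Hj).
have [a0 _ _ _] := ainv (ltnW Hj).
have Eq : qq j.+1 = rr j.+1 + (be j.+1 / al j) *: rr j by rewrite rrS subrK.
have wvD : forall (x y : 'cV[R]_n) c, wv (x + c *: y) = wv x + c *: wv y.
  by move=> x y c; rewrite /wv mulmxDr -scalemxAr.
have CD : forall (x y : 'cV[R]_n) c, C *m (x + c *: y) = C *m x + c *: (C *m y).
  by move=> x y c; rewrite mulmxDr -scalemxAr.
rewrite Eq Sx wvD CD e1 e2 e3 e4.
rewrite !(scalerA (be j.+1 / al j) (al j)) divfK // gmS !ghE.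
rewrite !mulmxDr -!scalemxAr !mulmxDr -!scalemxAr !scalerDr.
by rewrite addrACA.
Qed.

Lemma ip_gh_low i j : (j < i <= n0)%N ->
  ip (qq i) (gh j) = if i == j.+1 then be i else 0.
Proof.
case/andP=> Hji Hi.
rewrite gh_dec ipD ip_sum big1 ?add0r; last first.
  move=> l _; have Hl : (l < i)%N by apply: leq_trans (ltn_ord l) _.
  rewrite ipZ ONn ?gtn_eqF ?mulr0 //.
  by apply: leq_trans Hi; apply: ltnW.
rewrite ipZ ONn //; last by apply: leq_trans Hi.
by case: eqP => [->|_]; rewrite ?mulr1 ?mulr0.
Qed.

Local Notation K := n0.+1.
Lemma cst : craig_st M A C N b K = st n0. Proof. by []. Qed.

Lemma Hent (i j : 'I_K) : craigH M A C N b K i j = ip (qq i) (gh j).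
Proof.
have Hi : (i <= n0)%N by rewrite -ltnS ltn_ord.
have Hj : (j <= n0)%N by rewrite -ltnS ltn_ord.
rewrite mxE; case: leqP => Hij.
  rewrite /craig_hs cst nth_rcons size_h.
  case: ltngtP Hj => // [Hjn _|Hjn _].
    by rewrite nth_h // nth_hh.
  by rewrite -/(hh n0) nth_hh // hcE Hjn.
rewrite ip_gh_low ?Hij ?Hi //.
by case: eqP => // _; rewrite /beta_ cst nth_be.
Qed.

Lemma mulmx_entry p q r (X : 'M[R]_(p,q)) (Y : 'M[R]_(q,r)) i j :
  (X *m Y) i j = (row i X *m col j Y) 0 0.
Proof. by rewrite !mxE; apply: eq_bigr => k _; rewrite !mxE. Qed.

Definition Qm := craigQ M A C N b K.

Lemma colQ (j : 'I_K) : col j Qm = qq j.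
Proof.
apply/matrixP => a c; rewrite !mxE ord1 cst nth_q //.
by rewrite -ltnS ltn_ord.
Qed.

Lemma rowQt (j : 'I_K) : row j Qm^T = (qq j)^T.
Proof. by rewrite -tr_col colQ. Qed.

Lemma QtQ : Qm^T *m N *m Qm = 1%:M.
Proof.
apply/matrixP => i j; rewrite mulmx_entry row_mul rowQt colQ.
change (ip (qq i) (qq j) = 1%:M i j); rewrite ONn; last 2 first.
- by rewrite -ltnS ltn_ord.
- by rewrite -ltnS ltn_ord.
by rewrite mxE.
Qed.

Lemma QSQ : Qm^T *m schurS M A C *m Qm = craigH M A C N b K *m craigB M A C N b K.
Proof.
apply/matrixP => i j.
have Hj : (j <= n0)%N by rewrite -ltnS ltn_ord.
rewrite mulmx_entry row_mul rowQt colQ -mulmxA.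
rewrite -[schurS M A C *m qq j](mulKVmx unitN) (mulmxA (qq i)^T N).
rewrite -/(ip (qq i) (invmx N *m (schurS M A C *m qq j))).
rewrite Sq // ipD ipZ.
rewrite mxE (bigD1 j) //= [craigB _ _ _ _ _ _ _ j]mxE eqxx /alpha_ cst nth_al //.
rewrite Hent mulrC; congr (_ + _).
case: j Hj => [[|j'] Hj'] Hj /=.
  rewrite ip0 big1 // => l Hl; rewrite [craigB _ _ _ _ _ _ _ _]mxE.
  have -> : (l == 0%N :> nat) = false.
    by apply/negbTE; apply: contra Hl => /eqP E; apply/eqP/val_inj.
  by rewrite mulr0.
have Hj'K : (j' < K)%N by apply: ltnW.
rewrite (bigD1 (Ordinal Hj'K)) /=; last first.
  by apply/negP => /eqP/(congr1 val) /= /eqP; rewrite eqn_leq ltnn andbF.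
rewrite [craigB _ _ _ _ _ _ _ _]mxE (eqn_leq j') ltnn andbF eqxx /beta_ cst nth_be // Hent.
rewrite big1 ?addr0; last first.
  move=> l /andP [H1 H2]; rewrite [craigB _ _ _ _ _ _ _ _]mxE.
  have -> : (l == j'.+1 :> nat) = false.
    by apply/negbTE; apply: contra H1 => /eqP E; apply/eqP/val_inj.
  have -> : (j'.+1 == l.+1 :> nat) = false.
    rewrite eqSS; apply/negbTE; apply: contra H2 => /eqP E; apply/eqP/val_inj => /=.
    by rewrite E.
  by rewrite mulr0.
by rewrite ipZ mulrC.
Qed.

Lemma wv_neq0 (x : 'cV[R]_n) : x != 0 -> wv x != 0.
Proof.
move=> nz; apply: contra nz => /eqP H; apply/eqP; apply: Ainj.
have -> : A *m x = M *m wv x by rewrite /wv -mulmxA mulKVmx // unitM.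
by rewrite H mulmx0.
Qed.

Lemma tr11 (a : 'M[R]_1) : a 0 0 = a^T 0 0.
Proof. by rewrite mxE. Qed.

Lemma Spos (x : 'cV[R]_n) : x != 0 -> 0 < (x^T *m schurS M A C *m x) 0 0.
Proof.
move=> nz; have hu := wv_neq0 nz.
rewrite -mulmxA Sx mulmxDr mxE.
have E1 : (x^T *m (A^T *m wv x)) 0 0 = qform M (wv x).
  rewrite mulmxA -trmx_mul.
  have -> : A *m x = M *m wv x by rewrite /wv -mulmxA mulKVmx // unitM.
  by rewrite /qform tr11 trmx_mul trmxK mulmxA.
have E2 : (x^T *m (C *m x)) 0 0 = qform C x by rewrite mulmxA.
by rewrite E1 E2; move: (HM hu) (HC x) => *; lra.
Qed.

Lemma QSQ_unit : (Qm^T *m schurS M A C *m Qm) \in unitmx.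
Proof.
apply: posdef_unit => z nz.
have hQ : Qm *m z != 0.
  apply: contra nz => /eqP H; apply/eqP.
  by rewrite -(mul1mx z) -QtQ -mulmxA H mulmx0.
have -> : z^T *m (Qm^T *m schurS M A C *m Qm) *m z
          = (Qm *m z)^T *m schurS M A C *m (Qm *m z) by rewrite trmx_mul !mulmxA.
by rewrite gt_eqF // Spos.
Qed.

Lemma HB_unit : craigH M A C N b K \in unitmx /\ craigB M A C N b K \in unitmx.
Proof. by move: QSQ_unit; rewrite QSQ unitmx_mul => /andP [h1 h2]; split. Qed.

Definition e1 : 'cV[R]_K := \col_(i < K) (if i == 0 :> nat then beta_ M A C N b K 0 else 0).

Lemma Qtb : Qm^T *m b = e1.
Proof.
apply/matrixP => i c; rewrite ord1 mulmx_entry rowQt.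
have -> : col 0 b = b by apply/matrixP => a c'; rewrite !mxE ord1.
have Hb0 : b = N *m (be 0 *: qq 0).
  by rewrite qq0 scalerA mulfV ?scale1r ?mulKVmx ?unitN // lt0r_neq0 // be0_gt0.
rewrite Hb0 mulmxA -/(ip _ _) ipZ ONn //; last by rewrite -ltnS ltn_ord.
rewrite mxE /beta_ cst nth_be // eq_sym.
by case: (0%N == i :> nat); rewrite ?mulr1 ?mulr0.
Qed.

Lemma Gal : Qm^T *m (- b - schurS M A C *m craig_p M A C N b K) = 0.
Proof.
have [uH uB] := HB_unit.
rewrite mulmxBr mulmxN Qtb /craig_p -/Qm /craig_y -/e1 !mulmxN !mulmxA QSQ.
rewrite -(mulmxA (craigH _ _ _ _ _ _)) mulmxV // mulmx1.
by rewrite mulmxV // mul1mx opprK addNr.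
Qed.

Definition Tm := invmx N *m schurS M A C.

Lemma kry_mono j j' : (j <= j')%N -> (krylov M A C N b j <= krylov M A C N b j')%MS.
Proof.
move=> H; apply/row_subP => i; rewrite rowK.
by rewrite -[X in (X <= _)%MS](rowK (fun i : 'I_j' => ((Tm ^+ i *m (invmx N *m b))^T)) (widen_ord H i)) row_sub.
Qed.

Lemma exprSmx i : Tm ^+ i.+1 = Tm *m Tm ^+ i.
Proof. by rewrite exprS mulmxE. Qed.

Lemma kry_T j (x : 'cV[R]_n) : (x^T <= krylov M A C N b j)%MS ->
  ((Tm *m x)^T <= krylov M A C N b j.+1)%MS.
Proof.
move=> /submxP [D hD]; rewrite trmx_mul hD -mulmxA.
apply: submx_trans (submxMl _ _) _.
apply/row_subP => i; rewrite row_mul rowK -trmx_mul -/Tm (mulmxA Tm (Tm ^+ i)) -exprSmx.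
by rewrite -[X in (X <= _)%MS](rowK (fun i : 'I_j.+1 => ((Tm ^+ i *m (invmx N *m b))^T)) (lift ord0 i)) row_sub.
Qed.

Lemma spD p (X : 'M[R]_(p, n)) (x y : 'cV[R]_n) : (x^T <= X)%MS -> (y^T <= X)%MS -> ((x + y)^T <= X)%MS.
Proof. by move=> h1 h2; rewrite linearD /= addmx_sub. Qed.
Lemma spZ p (X : 'M[R]_(p, n)) c (x : 'cV[R]_n) : (x^T <= X)%MS -> ((c *: x)^T <= X)%MS.
Proof. by move=> h1; rewrite linearZ /= scalemx_sub. Qed.
Lemma spB p (X : 'M[R]_(p, n)) (x y : 'cV[R]_n) : (x^T <= X)%MS -> (y^T <= X)%MS -> ((x - y)^T <= X)%MS.
Proof. by move=> h1 h2; rewrite -scaleN1r; apply: spD => //; apply: spZ. Qed.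
Lemma sp_sum p (X : 'M[R]_(p, n)) k (F : 'I_k -> 'cV[R]_n) :
  (forall l, ((F l)^T <= X)%MS) -> ((\sum_(l < k) F l)^T <= X)%MS.
Proof.
move=> h; rewrite linear_sum /=.
by apply: summx_sub => l _; apply: h.
Qed.

Lemma qqS_expr j : (j < n0)%N -> qq j.+1 = (be j.+1)^-1 *:
  ((al j)^-1 *: (Tm *m qq j - gm j) - \sum_(l < j.+1) hc j l *: qq l).
Proof.
move=> Hj; have [a0 _ _ _] := ainv (ltnW Hj).
have Hb1 : be j.+1 != 0 by apply: Hbe; rewrite Hj.
rewrite /Tm -mulmxA Sq ?(ltnW Hj) // addrK scalerA mulVf // scale1r.
by rewrite gh_dec addrC addKr scalerA mulVf // scale1r.
Qed.

Lemma Q_in_K j : (j <= n0)%N -> forall l, (l <= j)%N -> ((qq l)^T <= krylov M A C N b j.+1)%MS.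
Proof.
elim: j => [_ l|j IH Hj l Hl].
  rewrite leqn0 => /eqP ->; rewrite qq0; apply: spZ.
  have -> : y0^T = row ord0 (krylov M A C N b 1) by rewrite rowK expr0 mul1mx.
  exact: row_sub.
have IH' := IH (ltnW Hj).
have mono : forall x : 'cV[R]_n, (x^T <= krylov M A C N b j.+1)%MS -> (x^T <= krylov M A C N b j.+2)%MS.
  by move=> x hx; apply: submx_trans hx (kry_mono _).
case: (ltngtP l j.+1) Hl => // [Hl _|-> _]; first by apply: mono; apply: IH'; rewrite -ltnS.
have hsum : ((\sum_(l < j.+1) hc j l *: qq l)^T <= krylov M A C N b j.+1)%MS.
  by apply: sp_sum => l'; apply: spZ; apply: IH'; rewrite -ltnS ltn_ord.
rewrite qqS_expr //; apply: spZ; apply: spB; last by apply: mono.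
apply: spZ; apply: spB; first by apply: kry_T; apply: IH'.
apply: mono; case: (j) IH' => [|j'] IH'.
  by rewrite gm0 linear0 sub0mx.
rewrite gmS; apply: spZ; rewrite gh_dec; apply: spD.
  by apply: sp_sum => l'; apply: spZ; apply: IH'; exact: ltnW (ltn_ord l').
by apply: spZ; apply: IH'.
Qed.

Lemma Qt_sub_K : (Qm^T <= krylov M A C N b K)%MS.
Proof.
apply/row_subP => j; rewrite rowQt.
apply: submx_trans (Q_in_K _ (leqnn j)) (kry_mono _).
- by rewrite -ltnS ltn_ord.
- exact: ltn_ord.
Qed.

Lemma K_sub_Qt : (krylov M A C N b K <= Qm^T)%MS.
Proof.
have [_ <-] := mxrank_leqif_sup Qt_sub_K.
have r1 : \rank Qm^T = K.
  apply/eqP; rewrite eqn_leq rank_leq_row /=.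
  by rewrite -{1}(mxrank1 R K) -QtQ -mulmxA mxrankM_maxl.
rewrite r1 eqn_leq rank_leq_row andbT -{1}r1.
exact: mxrankS Qt_sub_K.
Qed.

Lemma zid (V : zmodType) (u X Y : V) : Y - X = (u - X) - (u - Y).
Proof. by rewrite opprB [RHS]addrC [RHS]addrA subrK. Qed.

Lemma main_sec :
  let S := schurS M A C in
  let Kk := krylov M A C N b K in
  let p := craig_p M A C N b K in
  [/\ craigH M A C N b K \in unitmx,
      (p^T <= Kk)%MS,
      (forall x : 'cV[R]_n, (x^T <= Kk)%MS -> (- b - S *m p)^T *m x = 0),
      (forall p' : 'cV[R]_n, (p'^T <= Kk)%MS ->
         (forall x : 'cV[R]_n, (x^T <= Kk)%MS -> (- b - S *m p')^T *m x = 0) ->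
         p' = p)
    & craig_u M A C N b K = - (invmx M *m A *m p)].
Proof.
move=> S Kk p.
have Gx : forall x : 'cV[R]_n, (x^T <= Kk)%MS -> (- b - S *m p)^T *m x = 0.
  move=> x hx; have /submxP [D hD] := submx_trans hx K_sub_Qt.
  have -> : x = Qm *m D^T by rewrite -[x]trmxK hD trmx_mul trmxK.
  have E : (- b - S *m p)^T *m Qm = 0.
    by rewrite -[Qm]trmxK -trmx_mul /S /p Gal trmx0.
  by rewrite mulmxA E mul0mx.
split => //.
- by have [] := HB_unit.
- rewrite /p /craig_p -/Qm trmx_mul.
  exact: submx_trans (submxMl _ _) Qt_sub_K.
move=> p' hp' Gp'.
set d := p' - p.
have hd : (d^T <= Kk)%MS.
  apply: spB => //; rewrite /p /craig_p -/Qm trmx_mul.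
  exact: submx_trans (submxMl _ _) Qt_sub_K.
have dE : d = p' - p by [].
clearbody d.
have E1 := Gp' d hd; have E2 := Gx d hd.
have E : (S *m d)^T *m d = 0.
  have Sd : S *m d = (- b - S *m p) - (- b - S *m p').
    by rewrite dE mulmxBr (zid (- b)).
  by rewrite Sd linearB /= mulmxBl E1 E2 subrr.
have h := congr1 (fun a : 'M[R]_1 => a 0 0) E.
move: h; rewrite /= tr11 trmx_mul trmxK mulmxA => h.
apply/eqP; rewrite -subr_eq0 -dE; apply/negPn/negP => nz.
by have := Spos nz; rewrite -/S h mxE ltxx.
Qed.

End Craig.

Unset Implicit Arguments.

Theorem theorem4p1 (R : rcfType) (m n : nat)
    (M : 'M[R]_m) (A : 'M[R]_(m, n)) (C N : 'M[R]_n) (b : 'cV[R]_n)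
    (k : nat) :
  (n <= m)%N ->
  (forall x : 'cV[R]_m, x != 0 -> 0 < qform M x) ->
  \rank A = n ->
  C^T = C -> (forall x : 'cV[R]_n, 0 <= qform C x) ->
  b != 0 ->
  N^T = N -> (forall x : 'cV[R]_n, x != 0 -> 0 < qform N x) ->
  (1 <= k)%N ->
  (* Q_k, B_k, H_k are defined: the recurrence did not stop before step k,
     i.e. beta_2, ..., beta_k are nonzero *)
  (forall j : nat, (1 <= j < k)%N -> beta_ M A C N b k j != 0) ->
  let S := schurS M A C in
  let K := krylov M A C N b k in
  let p := craig_p M A C N b k in
  [/\ craigH M A C N b k \in unitmx,
      (p^T <= K)%MS,
      (forall x : 'cV[R]_n, (x^T <= K)%MS -> (- b - S *m p)^T *m x = 0),
      (forall p' : 'cV[R]_n, (p'^T <= K)%MS ->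
         (forall x : 'cV[R]_n, (x^T <= K)%MS -> (- b - S *m p')^T *m x = 0) ->
         p' = p)
    & craig_u M A C N b k = - (invmx M *m A *m p)].
Proof.
move=> _ HM HA _ HC Hb HNs HN; case: k => [//|n0] _ Hbeta.
have Hbe : forall j, (1 <= j <= n0)%N -> be M A C N b j != 0.
  move=> j /andP [h1 h2]; have := Hbeta j; rewrite h1 ltnS h2 /=.
  rewrite /beta_; change (craig_st M A C N b n0.+1) with (st M A C N b n0).
  by rewrite nth_be //; apply.
exact: (main_sec HM HA HC Hb HNs HN Hbe).
Qed.
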